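(* Let $K$ be a field of characteristic $p>0$ and $A^*$ a graded Hopf algebra over $K$ with a decreasing filtration satisfying (E1), (E2), (E3), (E4), (E6), (E7), (E8), and let $M^*$ be an unstable $A^*$-module. Then: (1) $\Sigma^{-1}\operatorname{Coker}\lambda_{M^*}$ is an unstable $A^*$-module; (2) if moreover the filtration satisfies (E9), then $\Sigma^{-1}\operatorname{Ker}\lambda_{M^*}$ is an unstable $A^*$-module.
   Context: Let $A^*$ be a graded Hopf algebra over a field $K$ of characteristic $p$, with product $\mu$ and a decreasing filtration $(F_iA^* )_{i\in\mathbb Z}$ by graded subspaces; $E_i^jA^*=(F_iA^* )^j/(F_{i+1}A^* )^j$. A left $A^*$-module $M^*$ with structure map $\alpha$ is unstable if $\alpha(F_{n+1}A^*\otimes M^n)=0$ for all $n$; then $\alpha$ induces $\bar\alpha_{M,n}\colon A^*/F_{n+1}A^*\otimes M^n\to M^*$. $(\Sigma^nV^* )^i=V^{i-n}$. Conditions: (E1) $F_iA^*=A^*$ for $i\le0$; (E2) $\bigcap_iF_iA^*=0$; (E3) each $F_iA^*$ is a left ideal; (E4) $\mu(F_iA^*\otimes A^j)\subset F_{i-j}A^*$; (E6) $E_{2i+\varepsilon}^kA^*=0$ if $k<2i(p-1)+\varepsilon$ or $2i+\varepsilon+k\not\equiv0,2\pmod{2p}$ ($i,k\in\mathbb Z$, $\varepsilon\in\{0,1\}$); (E7) $\dim E_{2i+\varepsilon}^{2i(p-1)+\varepsilon}A^*=1$ for $i\ge0$; (E8) for $i,j\ge0$, $\varepsilon\in\{0,1\}$,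 the map $\tilde\mu_{2i+\varepsilon}^{2i(p-1)+\varepsilon,j}\colon E_{2i+\varepsilon}^{2i(p-1)+\varepsilon}A^*\otimes(A^*/F_{2i-j+\varepsilon+1}A^* )^j\to E_{2i-j+\varepsilon}^{2i(p-1)+j+\varepsilon}A^*$, $[a]\otimes[b]\mapsto[ab]$, is an isomorphism. For $i,j\ge0$, $\varepsilon\in\{0,1\}$ put $\kappa=\varepsilon$ if $j$ is even and $\kappa=1-\varepsilon$ if $j$ is odd, and let $\gamma_{i,j,\varepsilon}$ be the composite of the map $A^{pj-(p-2)(\varepsilon-\kappa)}\otimes E_{2i-j+\varepsilon}^{(2i-j+\varepsilon-\kappa)(p-1)+\kappa}A^*\to E_{2i-j+\varepsilon}^{2i(p-1)+j+\varepsilon}A^*$ induced by left multiplication with $(\tilde\mu_{2i+\varepsilon}^{2i(p-1)+\varepsilon,j})^{-1}$. (E9): for every $k$, $\gamma_{i,j,\varepsilon}$ maps $(F_kA^* )^{pj-(p-2)(\varepsilon-\kappa)}\otimes E_{2i-j+\varepsilon}^{(2i-j+\varepsilon-\kappa)(p-1)+\kappa}A^*$ into $E_{2i+\varepsilon}^{2i(p-1)+\varepsilon}A^*\otimes(F_{\lceil k/p\rceil}A^*/F_{2i-j+\varepsilon+1}A^* )^j$. The module $\Phi M^*$: as a graded vector space $(\Phi M^* )^{2ip+2\varepsilon}=E_{2i+\varepsilon}^{2i(p-1)+\varepsilon}A^*\otimes M^{2i+\varepsilon}$ and $(\Phi M^* )^k=0$ for $k\not\equiv0,2\pmod{2p}$;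 the $A^*$-action is given on homogeneous pieces by: $A^{2jp}\otimes E_{2i+\varepsilon}^{2i(p-1)+\varepsilon}A^*\otimes M^{2i+\varepsilon}\to E_{2(i+j)+\varepsilon}^{2(i+j)(p-1)+\varepsilon}A^*\otimes M^{2(i+j)+\varepsilon}$ equal to $(1\otimes\bar\alpha_{M,2i+\varepsilon})\circ(\gamma_{i+j,2j,\varepsilon}\otimes1)$; $A^{2jp+2}\otimes E_{2i}^{2i(p-1)}A^*\otimes M^{2i}\to E_{2(i+j)+1}^{2(i+j)(p-1)+1}A^*\otimes M^{2(i+j)+1}$ equal to $(1\otimes\bar\alpha_{M,2i})\circ(\gamma_{i+j,2j+1,1}\otimes1)$; $A^{2jp-2}\otimes E_{2i+1}^{2i(p-1)+1}A^*\otimes M^{2i+1}\to E_{2(i+j)}^{2(i+j)(p-1)}A^*\otimes M^{2(i+j)}$ equal to $(1\otimes\bar\alpha_{M,2i+1})\circ(\gamma_{i+j,2j-1,0}\otimes1)$; all other components are zero. $\lambda_M\colon\Phi M^*\to M^*$ is given by $[a]\otimes x\mapsto ax$ on $E_{2i+\varepsilon}^{2i(p-1)+\varepsilon}A^*\otimes M^{2i+\varepsilon}$; it is a homomorphism of $A^*$-modules, so its kernel and cokernel are $A^*$-modules. *)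

(* Defs.v *)
From HB Require Import structures.
From mathcomp Require Import all_boot all_order all_algebra.
Set Implicit Arguments. Unset Strict Implicit. Unset Printing Implicit Defensive.
Import Order.TTheory GRing.Theory Num.Theory.
Local Open Scope ring_scope.

(* (only ever used when i = j holds; the 0 branch is never reached).        *)
Definition gcast (K : fieldType) (V : int -> lmodType K) (i j : int) (x : V i)
  : V j :=
  match @eqP _ i j with
  | ReflectT e => eq_rect i V x j e
  | ReflectF _ => 0
  end.
Arguments gcast {K} V {i j} x.

Definition subspace (K : fieldType) (V : lmodType K) (P : {pred V}) : Prop :=
  0 \in P /\ forall (c : K) (u v : V), u \in P -> v \in P -> c *: u + v \in P.

Record galg (K : fieldType) := GAlg {
  gA :> int -> lmodType K;
  gmul : forall i j, gA i -> gA j -> gA (i + j);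
  gone : gA 0;
  gmulDl : forall i j (r : K) (a b : gA i) (c : gA j),
      gmul (r *: a + b) c = r *: gmul a c + gmul b c;
  gmulDr : forall i j (r : K) (a : gA i) (b c : gA j),
      gmul a (r *: b + c) = r *: gmul a b + gmul a c;
  gmulA : forall i j k (a : gA i) (b : gA j) (c : gA k),
      gmul (gmul a b) c = gcast gA (gmul a (gmul b c));
  gmul1l : forall j (a : gA j), gmul gone a = gcast gA a;
  gmul1r : forall j (a : gA j), gmul a gone = gcast gA a
}.
Arguments gmul {K A i j} : rename.
Arguments gone {K A} : rename.

(* A decreasing filtration (F_i A^* )_{i in Z} by graded subspaces:
   gF i k is the subspace (F_i A^* )^k of A^k. *)
Unset Implicit Arguments.
Record gfilt (K : fieldType) (A : galg K) := GFilt {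
  gF :> int -> forall k : int, {pred A k};
  gF_sub : forall i k : int, subspace (gF i k);
  gF_decr : forall (i k : int) (a : A k), a \in gF (i + 1) k -> a \in gF i k
}.

Set Implicit Arguments.
Arguments gfilt {K} A.
Arguments gF {K A} _ _ _ : rename.
Arguments gF_sub {K A}.
Arguments gF_decr {K A}.

Record gmod (K : fieldType) (A : galg K) := GMod {
  gM :> int -> lmodType K;
  gact : forall i j, A i -> gM j -> gM (i + j);
  gactDl : forall i j (r : K) (a b : A i) (x : gM j),
      gact (r *: a + b) x = r *: gact a x + gact b x;
  gactDr : forall i j (r : K) (a : A i) (x y : gM j),
      gact a (r *: x + y) = r *: gact a x + gact a y;
  gactA : forall i j k (a : A i) (b : A j) (x : gM k),
      gact (gmul a b) x = gcast gM (gact a (gact b x));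
  gact1 : forall j (x : gM j), gact gone x = gcast gM x
}.
Arguments gact {K A M i j} : rename.

Section Conditions.
Variables (K : fieldType) (p : nat) (A : galg K) (F : gfilt A).
Local Notation P := (p%:Z).

(* phi is a linear functional on the quotient space PP/QQ (QQ <= PP):       *)
Definition is_funcl (V : lmodType K) (PP QQ : {pred V}) (phi : V -> K) : Prop :=
  (forall (c : K) (u v : V), u \in PP -> v \in PP ->
      phi (c *: u + v) = c * phi u + phi v) /\
  (forall u, u \in QQ -> phi u = 0).

(* A finite list s = [(v_l, w_l)] with v_l in PP represents the tensor       *)
(* sum_l [v_l] (x) w_l of (PP/QQ) (x) W.  [tens_in PP QQ U s] says that     *)
(* this tensor (read in (PP/QQ) (x) (W/R) for a subspace R <= U) lies in     *)
(* (PP/QQ) (x) (U/R); with U = R it says that the tensor is zero.  It is    *)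
Definition tens_in (V W : lmodType K) (PP QQ : {pred V}) (U : {pred W})
    (s : seq (V * W)) : Prop :=
  forall phi : V -> K, is_funcl PP QQ phi ->
    \sum_(vw <- s) phi vw.1 *: vw.2 \in U.

Definition quot_dim1 (V : lmodType K) (PP QQ : {pred V}) : Prop :=
  exists2 g : V, g \in PP &
    g \notin QQ /\ forall a, a \in PP -> exists c : K, a - c *: g \in QQ.

Definition gn (i e : int) : int := 2 * i + e.
Definition gk (i e : int) : int := 2 * i * (P - 1) + e.
Definition gm (i j e : int) : int := 2 * i - j + e.
Definition gkappa (j e : int) : int := if odd `|j|%N then 1 - e else e.
Definition gdb (j e : int) : int := P * j - (P - 2) * (e - gkappa j e).
Definition gda (i j e : int) : int :=
  (gm i j e - gkappa j e) * (P - 1) + gkappa j e.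

Definition E1 : Prop := forall i k (a : A k), i <= 0 -> a \in F i k.
Definition E2 : Prop := forall k (a : A k), (forall i, a \in F i k) -> a = 0.
Definition E3 : Prop :=
  forall i j k (b : A j) (a : A k), a \in F i k -> gmul b a \in F i (j + k).
Definition E4 : Prop :=
  forall i j k (a : A k) (b : A j), a \in F i k -> gmul a b \in F (i - j) (k + j).
(* E_{2i+eps}^k A^* = 0, i.e. (F_{2i+eps} A)^k = (F_{2i+eps+1} A)^k *)
Definition E6 : Prop :=
  forall i k e : int, e \in [:: 0; 1] ->
    (k < gk i e \/ ((gn i e + k) %% (2 * P))%Z \notin [:: 0; 2]) ->
    forall a : A k, a \in F (gn i e) k -> a \in F (gn i e + 1) k.
Definition E7 : Prop :=
  forall i e : int, 0 <= i -> e \in [:: 0; 1] ->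
    quot_dim1 (F (gn i e) (gk i e)) (F (gn i e + 1) (gk i e)).
(* the map  E_{2i+eps}^{2i(p-1)+eps} (x) (A/F_{2i-j+eps+1})^j -> E_{2i-j+eps},
   [a] (x) [b] |-> [ab], is injective and surjective *)
Definition E8 : Prop :=
  forall i j e : int, 0 <= i -> 0 <= j -> e \in [:: 0; 1] ->
  (forall s : seq (A (gk i e) * A j),
     all (fun gc => gc.1 \in F (gn i e) (gk i e)) s ->
     \sum_(gc <- s) gmul gc.1 gc.2 \in F (gm i j e + 1) (gk i e + j) ->
     tens_in (F (gn i e) (gk i e)) (F (gn i e + 1) (gk i e))
             (F (gm i j e + 1) j) s)
  /\
  (forall c : A (gk i e + j), c \in F (gm i j e) (gk i e + j) ->
     exists2 s : seq (A (gk i e) * A j),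
       all (fun gc => gc.1 \in F (gn i e) (gk i e)) s &
       c - \sum_(gc <- s) gmul gc.1 gc.2 \in F (gm i j e + 1) (gk i e + j)).

(* t represents gamma_{i,j,eps}(b (x) [a]) in
   E_{2i+eps}^{2i(p-1)+eps} (x) (A/F_{2i-j+eps+1})^j, i.e.
   mu~(t) = [b a] in E_{2i-j+eps}. *)
Definition gamma_rep (i j e : int) (b : A (gdb j e)) (a : A (gda i j e))
    (t : seq (A (gk i e) * A j)) : bool :=
  all (fun hc => hc.1 \in F (gn i e) (gk i e)) t &&
  ((\sum_(hc <- t) gmul hc.1 hc.2) - gcast A (gmul b a)
     \in F (gm i j e + 1) (gk i e + j)).

(* ceiling of k/p *)
Definition ceilz (k : int) : int := - ((- k) %/ P)%Z.

Definition E9 : Prop :=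
  forall i j e : int, 0 <= i -> 0 <= j -> e \in [:: 0; 1] ->
  forall (k : int) (b : A (gdb j e)) (a : A (gda i j e))
         (t : seq (A (gk i e) * A j)),
    b \in F k (gdb j e) -> a \in F (gm i j e) (gda i j e) ->
    gamma_rep b a t ->
    (* image of (F_{ceil(k/p)} A)^j in (A/F_{2i-j+eps+1})^j *)
    tens_in (F (gn i e) (gk i e)) (F (gn i e + 1) (gk i e))
            (F (Order.min (ceilz k) (gm i j e + 1)) j) t.

Variable M : gmod A.

Definition unstable : Prop :=
  forall n k (a : A k) (x : M n), a \in F (n + 1) k -> gact a x = 0.

(* An element of
   (Phi M^* )^{2ip+2eps} = E_{2i+eps}^{2i(p-1)+eps} (x) M^{2i+eps} is a list
   s = [(a_l, x_l)] (a_l in F_{2i+eps}), and lambda_M maps it to sum a_l x_l. *)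
Definition im_lambda (d : int) (y : M d) : Prop :=
  y = 0 \/
  exists i e : int, [/\ e \in [:: 0; 1], d = 2 * i * P + 2 * e &
    exists2 s : seq (A (gk i e) * M (gn i e)),
      all (fun ax => ax.1 \in F (gn i e) (gk i e)) s &
      y = gcast M (\sum_(ax <- s) gact ax.1 ax.2)].

(* Sigma^{-1} Coker lambda_M is unstable:
   (F_{n+1} A)^k . (Coker lambda_M)^{n+1} = 0 for all n. *)
Definition desusp_coker_unstable : Prop :=
  forall n k (a : A k) (x : M (n + 1)), a \in F (n + 1) k -> im_lambda (gact a x).

(* Each non-trivial component of the
   action of A^* on Phi M^* is of the form
     A^{pj-(p-2)(eps-kappa)} (x) E_{2i-j+eps}^{(2i-j+eps-kappa)(p-1)+kappa} (x) M^{2i-j+eps}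
        -> E_{2i+eps}^{2i(p-1)+eps} (x) M^{2i+eps},
     (1 (x) alphabar_{M,2i-j+eps}) o (gamma_{i,j,eps} (x) 1)
   (j = 2j' : the component on A^{2j'p}; j = 2j'+1, eps = 1 : on A^{2j'p+2};
   j = 2j'-1, eps = 0 : on A^{2j'p-2}); all other components vanish.
   The source lives in (Phi M^* )^{p(2i-j+eps-kappa)+2 kappa}.
   For y = sum_l [g_l] (x) x_l in Ker lambda_M of that degree and
   a in F_{deg y} A^*, we require a.y = 0, where a.y is computed from
   arbitrary representatives t_l of gamma(a (x) [g_l]). *)
Definition desusp_ker_unstable : Prop :=
  forall i j e : int, 0 <= i -> 0 <= j -> e \in [:: 0; 1] ->
  forall s : seq (A (gda i j e) * M (gm i j e)),
    all (fun gx => gx.1 \in F (gm i j e) (gda i j e)) s ->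
    \sum_(gx <- s) gact gx.1 gx.2 = 0 ->
  forall a : A (gdb j e),
    a \in F (P * (gm i j e - gkappa j e) + 2 * gkappa j e) (gdb j e) ->
  forall ts : seq (seq (A (gk i e) * A j)),
    all2 (fun gx t => gamma_rep a gx.1 t) s ts ->
    tens_in (F (gn i e) (gk i e)) (F (gn i e + 1) (gk i e)) (pred1 0)
      (flatten [seq [seq (hc.1, gact hc.2 st.1.2) | hc <- st.2]
               | st <- zip s ts]).

End Conditions.

(* Main.v *)
Require Import Defs.
From HB Require Import structures.
From mathcomp Require Import all_boot all_order all_algebra.
From mathcomp Require Import zify.
Import Order.TTheory GRing.Theory Num.Theory.
Local Open Scope ring_scope.
Set Warnings "-notation-overridden".

Set Implicit Arguments. Unset Strict Implicit.

Section Aux.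
Variable K : fieldType.

Lemma gcastE (V : int -> lmodType K) i (x : V i) : gcast V x = x.
Proof.
rewrite /gcast; case: eqP => // e.
by have -> : e = erefl by apply: eq_irrelevance.
Qed.

Lemma gcast_lin (V : int -> lmodType K) i j (c : K) (x y : V i) :
  gcast V (c *: x + y) = c *: (gcast V x : V j) + gcast V y.
Proof.
rewrite /gcast; case: eqP => [e|_]; last by rewrite scaler0 addr0.
by case: j / e.
Qed.

Lemma gcast0 (V : int -> lmodType K) i j : gcast V (0 : V i) = 0 :> V j.
Proof.
have := @gcast_lin V i j 1 0 0.
rewrite scale1r !addr0 => h.
by have := congr1 (fun z => z - (gcast V (0 : V i) : V j)) h; rewrite addrK subrr scale1r => ->.
Qed.

Lemma gcastD (V : int -> lmodType K) i j (x y : V i) :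
  gcast V (x + y) = (gcast V x : V j) + gcast V y.
Proof. by have := @gcast_lin V i j 1 x y; rewrite !scale1r. Qed.

Lemma gcast_sum (V : int -> lmodType K) i j T (s : seq T) (f : T -> V i) :
  gcast V (\sum_(t <- s) f t) = \sum_(t <- s) (gcast V (f t) : V j).
Proof.
elim: s => [|t s IH]; first by rewrite !big_nil gcast0.
by rewrite !big_cons gcastD IH.
Qed.

Lemma gcastK (V : int -> lmodType K) i j k (x : V i) :
  i = j -> (gcast V (gcast V x : V j) : V k) = gcast V x.
Proof. by move=> e; case: j / e; rewrite gcastE. Qed.

Variable A : galg K.

Lemma Fadd (F : gfilt A) i k (u v : A k) :
  u \in F i k -> v \in F i k -> u + v \in F i k.
Proof. by move=> hu hv; have := (gF_sub F i k).2 1 u v hu hv; rewrite scale1r. Qed.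

Lemma Fsub (F : gfilt A) i k (u v : A k) :
  u \in F i k -> v \in F i k -> u - v \in F i k.
Proof.
move=> hu hv; have := (gF_sub F i k).2 (-1) v u hv hu.
by rewrite scaleN1r addrC.
Qed.

Lemma F0 (F : gfilt A) i k : 0 \in F i k.
Proof. exact: (gF_sub F i k).1. Qed.

Lemma Fscale (F : gfilt A) i k c (u : A k) : u \in F i k -> c *: u \in F i k.
Proof. by move=> hu; have := (gF_sub F i k).2 c u 0 hu (F0 F i k); rewrite addr0. Qed.

Variable M : gmod A.

Lemma gact0l i j (x : M j) : gact (0 : A i) x = 0.
Proof.
have := gactDl 1 (0 : A i) 0 x; rewrite scale1r !addr0 => h.
by have := congr1 (fun z => z - gact (0 : A i) x) h; rewrite addrK subrr ?scale1r => ->.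
Qed.

Lemma gact0r i j (a : A i) : gact a (0 : M j) = 0.
Proof.
have := gactDr 1 a (0 : M j) 0; rewrite scale1r !addr0 => h.
by have := congr1 (fun z => z - gact a (0 : M j)) h; rewrite addrK subrr ?scale1r => ->.
Qed.

Lemma gactDl' i j (a b : A i) (x : M j) : gact (a + b) x = gact a x + gact b x.
Proof. by have := gactDl 1 a b x; rewrite !scale1r. Qed.

Lemma gactBl i j (a b : A i) (x : M j) : gact (a - b) x = gact a x - gact b x.
Proof. by have := gactDl (-1) b a x; rewrite !scaleN1r (addrC a (-b)) => ->; rewrite (addrC (- gact b x)). Qed.

Lemma gact_suml i j T (s : seq T) (f : T -> A i) (x : M j) :
  gact (\sum_(t <- s) f t) x = \sum_(t <- s) gact (f t) x.
Proof.
elim: s => [|t s IH]; first by rewrite !big_nil gact0l.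
by rewrite !big_cons gactDl' IH.
Qed.

Lemma gact_gcastr l i j (a : A l) (x : M i) :
  i = j -> gact a (gcast M x : M j) = gcast M (gact a x).
Proof. by move=> e; case: j / e; rewrite !gcastE. Qed.

End Aux.

Unset Implicit Arguments.
Section Coker.
Variables (K : fieldType) (p : nat) (A : galg K) (F : gfilt A) (M : gmod A).
Hypotheses (hp : p \in [pchar K]%R) (h1 : E1 F) (h6 : E6 p F) (h8 : E8 p F)
  (hu : unstable F M).

Lemma P2 : 2 <= (p%:Z).
Proof. have := prime_gt1 (pcharf_prime hp). lia. Qed.

Lemma Mneg n (x : M n) : n < 0 -> x = 0.
Proof.
move=> hn.
have h0 : gact (gone : A 0) x = 0 by apply: hu; apply: h1; lia.
rewrite gact1 in h0.
have := @gcastK K M n (0 + n) n x (esym (add0r n)).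
by rewrite h0 gcast0 gcastE.
Qed.

Lemma coker_main m k (a : A k) (x : M m) :
  a \in F m k -> im_lambda p F (gact a x).
Proof.
move=> ha.
case: (ltP m 0) => hm.
  by left; rewrite (Mneg _ x hm) gact0r.
have [i' [e' [hme he']]] : exists i' e' : int, m = 2 * i' + e' /\ (e' = 0 \/ e' = 1).
  by exists (m %/ 2)%Z, (m %% 2)%Z; lia.
have he'l : e' \in [:: 0; 1] by case: he' => ->.
have Pge := P2.
case: (boolP ((k < gk p i' e') ||
   (((gn i' e' + k) %% (2 * p%:Z))%Z \notin [:: 0; 2]))) => hc.
  left; apply: (hu m k a x).
  have -> : m + 1 = gn i' e' + 1 by rewrite /gn hme.
  apply: (h6 i' k e' he'l).
    by case/orP: hc => h; [left | right].
  by rewrite /gn -hme.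
move: hc; rewrite negb_or negbK -leNgt inE => /andP [hk hr].
have [i [e [j [hi hj he hmE hkE]]]] : exists i e j : int,
  [/\ 0 <= i, 0 <= j, e = 0 \/ e = 1, m = gm i j e & k = gk p i e + j].
  have hr' : ((m + k) %% (2 * p%:Z))%Z = 0 \/ ((m + k) %% (2 * p%:Z))%Z = 2.
    by move: hr; rewrite /gn -hme !inE => /orP [/eqP|/eqP]; [left|right].
  have hdz := divz_eq (m + k) (2 * p%:Z).
  move: hk; rewrite /gk => hk.
  set q := ((m + k) %/ (2 * p%:Z))%Z in hdz.
  case: hr' => hr'; rewrite hr' in hdz.
  - exists q, 0, (2 * q - m); rewrite /gm /gk.
    have hq1 : i' <= q by nia.
    have : 2 * i' + e' <= 2 * q.
      case: (ltP i' q) => hq2; first by lia.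
      have hq3 : q = i' by lia.
      rewrite hq3 in hdz; nia.
    split; try lia.
  - exists q, 1, (2 * q + 1 - m); rewrite /gm /gk.
    have hq1 : i' <= q by nia.
    have : 2 * i' + e' <= 2 * q + 1 by lia.
    split; try lia.
clear hme hk hr; subst m k.
have hel : e \in [:: 0; 1] by case: he => ->.
have [s hs hd] := (h8 i j e hi hj hel).2 a ha.
have hz : gact (a - \sum_(gc <- s) gmul gc.1 gc.2) x = 0 by apply: hu.
rewrite gactBl gact_suml in hz.
move/eqP: hz; rewrite subr_eq0 => /eqP ->.
right; exists i, e; split => //.
  by rewrite /gk /gm; lia.
exists [seq (gc.1, (gcast M (gact gc.2 x) : M (gn i e))) | gc <- s].
  by rewrite all_map.
rewrite big_map gcast_sum; apply: eq_bigr => gc _ /=.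
rewrite gactA gact_gcastr; last by rewrite /gn /gm; lia.
by rewrite [RHS]gcastK // /gn /gm; lia.
Qed.

End Coker.

Set Implicit Arguments. Unset Strict Implicit.

Section Aux2.
Variable K : fieldType.

Lemma gcastB (V : int -> lmodType K) i j (x y : V i) :
  gcast V (x - y) = (gcast V x : V j) - gcast V y.
Proof. by have := @gcast_lin K V i j (-1) y x; rewrite !scaleN1r addrC (addrC (- _)). Qed.

Lemma gcastZ (V : int -> lmodType K) i j c (x : V i) :
  gcast V (c *: x) = c *: (gcast V x : V j).
Proof. by have := @gcast_lin K V i j c x 0; rewrite !addr0 gcast0 addr0. Qed.

Variable A : galg K.

Lemma Fcast (F : gfilt A) L L' k k' (u : A k) :
  k = k' -> L = L' -> u \in F L k -> (gcast A u : A k') \in F L' k'.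
Proof. by move=> e1 e2; case: k' / e1; case: L' / e2; rewrite gcastE. Qed.

Lemma Fle (F : gfilt A) L L' k (u : A k) : L <= L' -> u \in F L' k -> u \in F L k.
Proof.
move=> hle; have [d ->] : exists d : nat, L' = L + d%:Z.
  by exists `|L' - L|%N; lia.
elim: d => [|d IH]; first by rewrite addr0.
move=> h; apply: IH; apply: gF_decr.
by have -> : L + d%:Z + 1 = L + d.+1%:Z by lia.
Qed.

Lemma Fsum (F : gfilt A) L k (T : eqType) (s : seq T) (f : T -> A k) :
  (forall t, t \in s -> f t \in F L k) -> \sum_(t <- s) f t \in F L k.
Proof.
elim: s => [|t s IH] h; first by rewrite big_nil F0.
rewrite big_cons; apply: Fadd; first by apply: h; rewrite inE eqxx.
by apply: IH => u hu; apply: h; rewrite inE hu orbT.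
Qed.

Lemma gmul0l i j (b : A j) : gmul (0 : A i) b = 0.
Proof.
have := gmulDl 1 (0 : A i) 0 b; rewrite scale1r !addr0 => h.
by have := congr1 (fun z => z - gmul (0 : A i) b) h; rewrite addrK subrr scale1r => ->.
Qed.

Lemma gmul0r i j (a : A i) : gmul a (0 : A j) = 0.
Proof.
have := gmulDr 1 a (0 : A j) 0; rewrite scale1r !addr0 => h.
by have := congr1 (fun z => z - gmul a (0 : A j)) h; rewrite addrK subrr scale1r => ->.
Qed.

Lemma gmulDl' i j (a b : A i) (c : A j) : gmul (a + b) c = gmul a c + gmul b c.
Proof. by have := gmulDl 1 a b c; rewrite !scale1r. Qed.

Lemma gmulDr' i j (a : A i) (b c : A j) : gmul a (b + c) = gmul a b + gmul a c.
Proof. by have := gmulDr 1 a b c; rewrite !scale1r. Qed.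

Lemma gmulZl i j r (a : A i) (c : A j) : gmul (r *: a) c = r *: gmul a c.
Proof. by have := gmulDl r a 0 c; rewrite !addr0 gmul0l addr0. Qed.

Lemma gmulZr i j r (a : A i) (c : A j) : gmul a (r *: c) = r *: gmul a c.
Proof. by have := gmulDr r a c 0; rewrite !addr0 gmul0r addr0. Qed.

Lemma gmulBl i j (a b : A i) (c : A j) : gmul (a - b) c = gmul a c - gmul b c.
Proof. by rewrite gmulDl' -scaleN1r gmulZl scaleN1r. Qed.

Lemma gmulBr i j (a : A i) (b c : A j) : gmul a (b - c) = gmul a b - gmul a c.
Proof. by rewrite gmulDr' -scaleN1r gmulZr scaleN1r. Qed.

Lemma gmul_suml i j T (s : seq T) (f : T -> A i) (c : A j) :
  gmul (\sum_(t <- s) f t) c = \sum_(t <- s) gmul (f t) c.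
Proof.
elim: s => [|t s IH]; first by rewrite !big_nil gmul0l.
by rewrite !big_cons gmulDl' IH.
Qed.

Lemma gmul_sumr i j T (s : seq T) (f : T -> A j) (a : A i) :
  gmul a (\sum_(t <- s) f t) = \sum_(t <- s) gmul a (f t).
Proof.
elim: s => [|t s IH]; first by rewrite !big_nil gmul0r.
by rewrite !big_cons gmulDr' IH.
Qed.

Lemma gmul_gcastl i i' j (a : A i) (b : A j) :
  i = i' -> gmul (gcast A a : A i') b = gcast A (gmul a b).
Proof. by move=> e; case: i' / e; rewrite !gcastE. Qed.

Lemma gmul_gcastr i j j' (a : A i) (b : A j) :
  j = j' -> gmul a (gcast A b : A j') = gcast A (gmul a b).
Proof. by move=> e; case: j' / e; rewrite !gcastE. Qed.

Variable M : gmod A.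

Lemma gactZl i j r (a : A i) (x : M j) : gact (r *: a) x = r *: gact a x.
Proof. by have := gactDl r a 0 x; rewrite !addr0 gact0l addr0. Qed.

Lemma gactZr i j r (a : A i) (x : M j) : gact a (r *: x) = r *: gact a x.
Proof. by have := gactDr r a x 0; rewrite !addr0 gact0r addr0. Qed.

Lemma gactDr' i j (a : A i) (x y : M j) : gact a (x + y) = gact a x + gact a y.
Proof. by have := gactDr 1 a x y; rewrite !scale1r. Qed.

Lemma gact_sumr i j T (s : seq T) (f : T -> M j) (a : A i) :
  gact a (\sum_(t <- s) f t) = \sum_(t <- s) gact a (f t).
Proof.
elim: s => [|t s IH]; first by rewrite !big_nil gact0r.
by rewrite !big_cons gactDr' IH.
Qed.

Lemma gact_gcastl i i' j (a : A i) (x : M j) :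
  i = i' -> gact (gcast A a : A i') x = gcast M (gact a x).
Proof. by move=> e; case: i' / e; rewrite !gcastE. Qed.

End Aux2.

Set Implicit Arguments. Unset Strict Implicit.

Lemma gcast_inv (K : fieldType) (V : int -> lmodType K) i j (x : V i) (y : V j) :
  i = j -> y = gcast V x -> x = gcast V y.
Proof. by move=> e ->; rewrite gcastK // gcastE. Qed.

Lemma gcast_eq0 (K : fieldType) (V : int -> lmodType K) i j (x : V i) :
  i = j -> (gcast V x : V j) = 0 -> x = 0.
Proof. by move=> e h; rewrite (gcast_inv e (esym h)) gcast0. Qed.

Section Gen.
Variables (K : fieldType) (p : nat) (A : galg K) (F : gfilt A).
Hypothesis h7 : E7 p F.

Lemma scale_notin L k (G : A k) c :
  G \notin F L k -> c *: G \in F L k -> c = 0.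
Proof.
move=> hG hc; apply/eqP; apply/negP => /negP hc0.
move/negP: hG; apply; have := Fscale (c^-1) hc.
by rewrite scalerA mulVf // scale1r.
Qed.

Lemma gen i e : 0 <= i -> e \in [:: 0; 1] ->
  exists G : A (gk p i e), exists mu : A (gk p i e) -> K,
  [/\ G \in F (gn i e) (gk p i e),
      is_funcl (F (gn i e) (gk p i e)) (F (gn i e + 1) (gk p i e)) mu,
      (forall a, a \in F (gn i e) (gk p i e) -> a - mu a *: G \in F (gn i e + 1) (gk p i e))
    & mu G = 1].
Proof.
move=> hi he; have [G hG [hG' hall]] := h7 hi he.
set n := gn i e; set k := gk p i e.
have ex : forall a : A k, exists c : K, (a \in F n k) ==> (a - c *: G \in F (n + 1) k).
  move=> a; case: (boolP (a \in F n k)) => ha; last by exists 0.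
  by have [c hc] := hall a ha; exists c.
pose mu (a : A k) := xchoose (ex a).
have hmu : forall a, a \in F n k -> a - mu a *: G \in F (n + 1) k.
  by move=> a ha; have := xchooseP (ex a); move/implyP; apply.
have huniq : forall a c, a \in F n k -> a - c *: G \in F (n + 1) k -> mu a = c.
  move=> a c ha hc; have := Fsub (hc) (hmu a ha).
  rewrite opprB addrC addrA subrK -scalerBl => /(scale_notin hG') /eqP.
  by rewrite subr_eq0 => /eqP.
exists G, mu; split => //.
- split.
  + move=> c u v hu hv; apply: huniq; first exact: ((gF_sub F n k).2 c u v hu hv).
    have := Fadd (Fscale c (hmu u hu)) (hmu v hv).
    suff -> : c *: u + v - (c * mu u + mu v) *: G =
        c *: (u - mu u *: G) + (v - mu v *: G) by [].
    by rewrite scalerBr scalerDl scalerA opprD addrACA.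
  + move=> u hu; apply: huniq; first by apply: gF_decr.
    by rewrite scale0r subr0.
- by apply: huniq => //; rewrite scale1r subrr F0.
Qed.

Lemma phi_coord L k (G : A k) mu (phi : A k -> K) :
  G \in F L k -> is_funcl (F L k) (F (L + 1) k) phi ->
  (forall a, a \in F L k -> a - mu a *: G \in F (L + 1) k) ->
  forall h, h \in F L k -> phi h = mu h * phi G.
Proof.
move=> hG [hlin h0] hmu h hh.
have := hlin (- mu h) G h hG hh; rewrite scaleNr addrC h0 ?hmu //.
by move/eqP; rewrite eq_sym mulNr addrC subr_eq0 => /eqP.
Qed.

End Gen.

Unset Implicit Arguments.

Lemma ar_eq (P i i3 e e3 : int) : 2 <= P -> (e = 0 \/ e = 1) -> (e3 = 0 \/ e3 = 1) ->
  2 * i3 * (P - 1) + e3 + (2 * i3 + e3) = 2 * i * (P - 1) + e + (2 * i + e) ->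
  i3 = i /\ e3 = e.
Proof.
move=> hP he he3 h.
have h' : P * (i3 - i) = e - e3 by nia.
have hi : i3 = i.
  case: he => ?; case: he3 => ?; subst; try nia.
split=> //; rewrite hi in h'; lia.
Qed.

Lemma ceil_facts (p : nat) (L : int) : 2 <= p%:Z ->
  exists q r : int, [/\ - L = q * p%:Z + r, 0 <= r, r < p%:Z & ceilz p L = - q].
Proof.
move=> hP; exists ((- L) %/ p%:Z)%Z, ((- L) %% p%:Z)%Z; split.
- exact: divz_eq.
- by apply: modz_ge0; lia.
- by apply: ltz_pmod; lia.
- by [].
Qed.

Lemma ar_ceil_ge (p : nat) (L n : int) : 2 <= p%:Z -> L > p%:Z * (n - 1) ->
  n <= ceilz p L.
Proof.
move=> hP hL; have [q [r [h1 h2 h3 ->]]] := ceil_facts p L hP.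
nia.
Qed.

Lemma ar_ceil_le (p : nat) (L n : int) : 2 <= p%:Z -> ceilz p L <= n ->
  L <= p%:Z * n.
Proof.
move=> hP; have [q [r [h1 h2 h3 ->]]] := ceil_facts p L hP.
nia.
Qed.

Lemma ar_mod_e (P i e : int) : 2 <= P -> (e = 0 \/ e = 1) ->
  ((2 * i + e) %% (2 * P))%Z = 0 \/ ((2 * i + e) %% (2 * P))%Z = 2 -> e = 0.
Proof.
move=> hP he hr.
have hd := divz_eq (2 * i + e) (2 * P).
set q := ((2 * i + e) %/ (2 * P))%Z in hd.
set w := q * P.
have hw : q * (2 * P) = 2 * w by rewrite /w; lia.
rewrite hw in hd; case: hr => hr; rewrite hr in hd; lia.
Qed.

Lemma ar_final (P I eI i i2 e2 j3 : int) : 2 <= P ->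
  (eI = 0 \/ eI = 1) -> (e2 = 0 \/ e2 = 1) ->
  2 * I * (P - 1) + eI + (2 * i2 * (P - 1) + e2) = 2 * i * (P - 1) + 0 + j3 ->
  2 * i2 + e2 = 2 * i - j3 + 0 ->
  2 * I + eI <= P * (2 * i2 + e2) ->
  2 * i2 * (P - 1) + e2 <= j3 ->
  j3 = 2 * i2 * (P - 1) + e2.
Proof.
move=> hP heI he2 hgh hlv hc hge.
set u := i - i2.
have hX : 2 * I * (P - 1) + eI = 2 * P * u - 2 * e2 by rewrite /u; nia.
have heI0 : eI = 0.
  set w := P * u - e2 - I * (P - 1).
  have : eI = 2 * w by rewrite /w; nia.
  lia.
rewrite heI0 in hX hc.
set q := I - u.
have hI : I = P * q + e2 by rewrite /q; nia.
have hq : q <= i2.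
  rewrite hI in hc; case: he2 => ?; subst e2; nia.
have hu : u = q * (P - 1) + e2 by rewrite /q; nia.
have : u <= i2 * (P - 1) + e2 by rewrite hu; nia.
rewrite /u => hh; lia.
Qed.

Lemma ar_kappa (i i2 e e2 j : int) : 0 <= j -> (e = 0 \/ e = 1) -> (e2 = 0 \/ e2 = 1) ->
  2 * i2 + e2 = 2 * i - j + e -> gkappa j e = e2.
Proof.
case: j => [n|n] // _ he he2 h; rewrite /gkappa /=.
have hn : (n : int) = 2 * (n./2)%:Z + (odd n)%:Z.
  by have := odd_double_half n; rewrite -muln2; lia.
move: h hn; case: (odd n) => /= h hn; lia.
Qed.

Unset Implicit Arguments.

Ltac clear_all := repeat match goal with H : _ |- _ => clear H end.

Section Ker.
Variables (K : fieldType) (p : nat) (A : galg K) (F : gfilt A) (M : gmod A).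
Hypotheses (hp : p \in [pchar K]%R) (h1 : E1 F) (h2 : E2 F) (h3 : E3 F) (h4 : E4 F)
  (h6 : E6 p F) (h7 : E7 p F) (h8 : E8 p F) (hu : unstable F M) (h9 : E9 p F).
Set Implicit Arguments. Unset Strict Implicit.

Lemma Pge : 2 <= (p%:Z).
Proof. have := prime_gt1 (pcharf_prime hp). lia. Qed.

Lemma kill w (x : M w) L k (a : A k) : L = w + 1 -> a \in F L k -> gact a x = 0.
Proof. by move=> ->; apply: hu. Qed.

Lemma decomp L k (u : A k) : 0 <= L -> u \in F L k ->
  u \in F (L + 1) k \/ exists i e j : int,
    [/\ 0 <= i, 0 <= j, e \in [:: 0; 1], L = gm i j e & k = gk p i e + j].
Proof.
move=> hm ha.
have [i' [e' [hme he']]] : exists i' e' : int, L = 2 * i' + e' /\ (e' = 0 \/ e' = 1).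
  by exists (L %/ 2)%Z, (L %% 2)%Z; lia.
have he'l : e' \in [:: 0; 1] by case: he' => ->.
have Pg := Pge.
case: (boolP ((k < gk p i' e') ||
   (((gn i' e' + k) %% (2 * p%:Z))%Z \notin [:: 0; 2]))) => hc.
  left; have -> : L + 1 = gn i' e' + 1 by rewrite /gn hme.
  apply: (h6 i' k e' he'l).
    by case/orP: hc => h; [left | right].
  by rewrite /gn -hme.
right.
move: hc; rewrite negb_or negbK -leNgt inE => /andP [hk hr].
have hr' : ((L + k) %% (2 * p%:Z))%Z = 0 \/ ((L + k) %% (2 * p%:Z))%Z = 2.
  by move: hr; rewrite /gn -hme !inE => /orP [/eqP|/eqP]; [left|right].
have hdz := divz_eq (L + k) (2 * p%:Z).
move: hk; rewrite /gk => hk.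
set q := ((L + k) %/ (2 * p%:Z))%Z in hdz.
case: hr' => hr'; rewrite hr' in hdz.
- exists q, 0, (2 * q - L); rewrite /gm /gk.
  have hq1 : i' <= q by nia.
  have : 2 * i' + e' <= 2 * q.
    case: (ltP i' q) => hq2; first by lia.
    have hq3 : q = i' by lia.
    rewrite hq3 in hdz; nia.
  split; try lia; by rewrite !inE eqxx ?orbT.
- exists q, 1, (2 * q + 1 - L); rewrite /gm /gk.
  have hq1 : i' <= q by nia.
  have : 2 * i' + e' <= 2 * q + 1 by lia.
  split; try lia; by rewrite !inE eqxx ?orbT.
Qed.

Lemma Fzero k (a : A k) L : 0 <= L -> k < L -> a \in F L k -> a = 0.
Proof.
move=> hL hk ha; apply: h2 => i'.
case: (leP i' L) => hi'; first exact: Fle hi' ha.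
suff : forall d : nat, a \in F (L + d%:Z) k.
  by move=> /(_ `|i' - L|%N); apply: Fle; lia.
elim=> [|d IH]; first by rewrite addr0.
have Pg := Pge.
have hLd : 0 <= L + d%:Z by lia.
case: (decomp hLd IH) => [h|].
- by have -> : L + d.+1%:Z = L + d%:Z + 1 by lia.
- move=> [i0 [e0 [j0 [hi0 hj0 he0 hl hkk]]]].
  have he0' : e0 = 0 \/ e0 = 1 by move: he0; rewrite !inE => /orP [/eqP|/eqP]; [left|right].
  exfalso; move: hl hkk; rewrite /gm /gk => hl hkk; nia.
Qed.

Lemma gdb_gda i j e : gdb p j e + gda p i j e = gk p i e + j.
Proof. rewrite /gdb /gda /gk /gm. nia. Qed.

Definition isgen i e (G : A (gk p i e)) (mu : A (gk p i e) -> K) :=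
  [/\ G \in F (gn i e) (gk p i e),
      is_funcl (F (gn i e) (gk p i e)) (F (gn i e + 1) (gk p i e)) mu,
      (forall a, a \in F (gn i e) (gk p i e) -> a - mu a *: G \in F (gn i e + 1) (gk p i e))
    & mu G = 1].
Arguments isgen : clear implicits.

Lemma gen' i e : 0 <= i -> e \in [:: 0; 1] -> exists G mu, isgen i e G mu.
Proof. exact: gen. Qed.

Lemma injG i j e G mu : 0 <= i -> 0 <= j -> e \in [:: 0; 1] -> isgen i e G mu ->
  forall w : A j, gmul G w \in F (gm i j e + 1) (gk p i e + j) -> w \in F (gm i j e + 1) j.
Proof.
move=> hi hj he [hG hmu _ hmu1] w hw.
have := (h8 i j e hi hj he).1 [:: (G, w)].
rewrite /= hG big_seq1 => /(_ isT hw mu hmu).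
by rewrite big_seq1 /= hmu1 scale1r.
Qed.

Lemma collapse i e G mu j' (s : seq (A (gk p i e) * A j')) :
  isgen i e G mu -> all (fun gc => gc.1 \in F (gn i e) (gk p i e)) s ->
  gmul G (\sum_(gc <- s) mu gc.1 *: gc.2) - \sum_(gc <- s) gmul gc.1 gc.2
    \in F (gn i e + 1 - j') (gk p i e + j').
Proof.
move=> [hG hmu hco hmu1] /allP hs.
rewrite gmul_sumr -sumrB; apply: Fsum => gc hgc.
rewrite gmulZr -gmulZl -gmulBl; apply: h4.
have := Fsub (F0 F (gn i e + 1) (gk p i e)) (hco _ (hs _ hgc)).
by rewrite sub0r opprB.
Qed.


Definition cong L k (u v : A k) := u - v \in F L k.
Arguments cong L {k} u v.

Lemma cong_refl L k (u : A k) : cong L u u.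
Proof. by rewrite /cong subrr F0. Qed.

Lemma cong_sym L k (u v : A k) : cong L u v -> cong L v u.
Proof. by rewrite /cong => h; have := Fsub (F0 F L k) h; rewrite sub0r opprB. Qed.

Lemma cong_trans L k (u v w : A k) : cong L u v -> cong L v w -> cong L u w.
Proof. by rewrite /cong => k1 k2; have := Fadd k1 k2; rewrite addrA subrK. Qed.

Lemma cong_add L k (u1 u2 v1 v2 : A k) : cong L u1 v1 -> cong L u2 v2 ->
  cong L (u1 + u2) (v1 + v2).
Proof. by rewrite /cong => k1 k2; have := Fadd k1 k2; rewrite opprD addrACA. Qed.

Lemma cong_F L k (u v : A k) : cong L u v -> v \in F L k -> u \in F L k.
Proof. by rewrite /cong => k1 k2; have := Fadd k1 k2; rewrite subrK. Qed.

Lemma cong_0 L k (u : A k) : cong L u 0 <-> u \in F L k.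
Proof. by rewrite /cong subr0. Qed.

Lemma cong_cast L L' k k' (u v : A k) : k = k' -> L = L' -> cong L u v ->
  cong L' (gcast A u : A k') (gcast A v).
Proof. by rewrite /cong -gcastB; apply: Fcast. Qed.

Lemma cong_mull L k j' (b : A j') (u v : A k) : cong L u v -> cong L (gmul b u) (gmul b v).
Proof. by rewrite /cong -gmulBr; apply: h3. Qed.

Lemma cong_mulr L L' k j' (b : A j') (u v : A k) : L' = L - j' -> cong L u v ->
  cong L' (gmul u b) (gmul v b).
Proof. by rewrite /cong -gmulBl => ->; apply: h4. Qed.

Lemma cong_sum L k (T : eqType) (s : seq T) (f g : T -> A k) :
  (forall t, t \in s -> cong L (f t) (g t)) ->
  cong L (\sum_(t <- s) f t) (\sum_(t <- s) g t).
Proof.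
move=> h; rewrite /cong -sumrB; apply: Fsum => t ht; exact: h.
Qed.

Lemma cong_kill L k (u v : A k) w (x : M w) : L = w + 1 -> cong L u v ->
  gact u x = gact v x.
Proof.
move=> hL h; have := kill x hL h; rewrite gactBl => /eqP; rewrite subr_eq0 => /eqP //.
Qed.

Section KeyS.
Variables (i j e : int) (hi : 0 <= i) (hj : 0 <= j) (he : e \in [:: 0; 1]).
Variables (G : A (gk p i e)) (mu : A (gk p i e) -> K) (hG : isgen i e G mu).
Variables (da : int) (G2 : A da) (hG2 : G2 \in F (gm i j e) da)
  (x' : M (gm i j e)) (hx' : gact G2 x' = 0) (hm0 : 0 <= gm i j e).

Definition Good D (a : A D) := forall b : A j,
  gmul G b - (gcast A (gmul a G2) : A (gk p i e + j))
    \in F (gm i j e + 1) (gk p i e + j) -> gact b x' = 0.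

Lemma Good_F1 D (a : A D) :
  (gcast A (gmul a G2) : A (gk p i e + j)) \in F (gm i j e + 1) (gk p i e + j) ->
  Good a.
Proof.
move=> ha b hb; apply: (kill x' (erefl _)).
apply: (injG hi hj he hG).
by have := Fadd hb ha; rewrite subrK.
Qed.

Lemma rep D (a : A D) : D + da = gk p i e + j ->
  exists b : A j, gmul G b - (gcast A (gmul a G2) : A (gk p i e + j))
    \in F (gm i j e + 1) (gk p i e + j).
Proof.
move=> hD.
have hc : (gcast A (gmul a G2) : A (gk p i e + j)) \in F (gm i j e) (gk p i e + j).
  by apply: Fcast => //; apply: h3.
have [s hs hd] := (h8 i j e hi hj he).2 _ hc.
exists (\sum_(gc <- s) mu gc.1 *: gc.2).
have := collapse hG hs.
have -> : gn i e + 1 - j = gm i j e + 1 by clear_all; rewrite /gn /gm; lia.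
move=> hcol; have := Fsub hcol hd.
by rewrite opprB addrA subrK.
Qed.


Lemma Good_add D (a1 a2 : A D) : D + da = gk p i e + j ->
  Good a1 -> Good a2 -> Good (a1 + a2).
Proof.
move=> hD g1 g2 b hb.
have [b1 hb1] := rep a1 hD; have [b2 hb2] := rep a2 hD.
have hb12 : cong (gm i j e + 1) (gmul G b) (gmul G (b1 + b2)).
  apply: (cong_trans hb); rewrite gmulDr' gmulDl' gcastD.
  by apply: cong_sym; apply: cong_add.
have hd : b - (b1 + b2) \in F (gm i j e + 1) j.
  by apply: (injG hi hj he hG); rewrite gmulBr.
by rewrite (cong_kill x' (erefl _) hd) gactDl' (g1 _ hb1) (g2 _ hb2) addr0.
Qed.

Lemma Good0 D : Good (0 : A D).
Proof. by apply: Good_F1; rewrite gmul0l gcast0 F0. Qed.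

Lemma Good_sum D (T : eqType) (s : seq T) (f : T -> A D) : D + da = gk p i e + j ->
  (forall t, t \in s -> Good (f t)) -> Good (\sum_(t <- s) f t).
Proof.
move=> hD; elim: s => [|t s IH] h; first by rewrite big_nil; apply: Good0.
rewrite big_cons; apply: Good_add => //; first by apply: h; rewrite inE eqxx.
by apply: IH => u hu0; apply: h; rewrite inE hu0 orbT.
Qed.

Lemma Good_prod I eI J (g : A (gk p I eI)) (c : A J) D :
  0 <= I -> eI \in [:: 0; 1] -> 0 <= J -> g \in F (gn I eI) (gk p I eI) ->
  D = gk p I eI + J -> D + da = gk p i e + j -> da + gm i j e <= gm I J eI ->
  Good (gcast A (gmul g c) : A D).
Proof.
move=> hI heI hJ hg hD hDa hL b hb.
have Pg := Pge.
have hT : gk p I eI + (J + da) = gk p i e + j by rewrite addrA -hD.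
have hcast : (gcast A (gmul (gcast A (gmul g c) : A D) G2) : A (gk p i e + j))
    = gcast A (gmul g (gmul c G2)).
  rewrite gmul_gcastl; last by rewrite hD.
  rewrite gcastK; last by rewrite hD.
  by rewrite gmulA gcastK // addrA.
rewrite hcast in hb; clear hcast.
set u := gmul c G2 in hb.
have hu1 : u \in F (gm i j e) (J + da) by apply: h3.
case: (decomp hm0 hu1) => [hu2 | [i2 [e2 [j2 [hi2 hj2 he2 hm2 hk2]]]]].
  apply: (kill x' (erefl _)); apply: (injG hi hj he hG).
  apply: (cong_F hb); apply: Fcast => //; exact: h3.
have he2' : e2 = 0 \/ e2 = 1 by move: he2; rewrite !inE => /orP [/eqP|/eqP]; [left|right].
pose u2 := (gcast A u : A (gk p i2 e2 + j2)).
have hu2 : u2 \in F (gm i2 j2 e2) (gk p i2 e2 + j2) by exact: (Fcast hk2 hm2 hu1).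
have [r hr hr2] := (h8 i2 j2 e2 hi2 hj2 he2).2 _ hu2.
have [H [muH hH]] := gen' hi2 he2.
set D2 := \sum_(gc <- r) muH gc.1 *: gc.2.
have hU : cong (gm i j e + 1) u2 (gmul H D2).
  have := collapse hH hr.
  have -> : gn i2 e2 + 1 - j2 = gm i j e + 1 by move: hm2; clear_all; rewrite /gn /gm; lia.
  move=> hcol; apply: (cong_trans (v := \sum_(gc <- r) gmul gc.1 gc.2)).
    by rewrite /cong hm2.
  exact: (cong_sym hcol).
set z := gact D2 x'.
have hz : gact H z = 0.
  have e1 := cong_kill x' (erefl _) hU.
  rewrite gactA /u2 gact_gcastl // /u gactA hx' gact0r !gcast0 in e1.
  by apply: (gcast_eq0 _ (esym e1)); rewrite addrA.
have hHF : H \in F (gn i2 e2) (gk p i2 e2) by case: hH.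
pose v := gmul g H.
have hv : v \in F (gn i2 e2) (gk p I eI + gk p i2 e2) by apply: h3.
have hW : cong (gm i j e + 1) (gcast A (gmul g u) : A (gk p i e + j))
                              (gcast A (gmul v D2)).
  have c1 := cong_mull g hU.
  have c2 := cong_cast (k' := gk p i e + j) (L' := gm i j e + 1)
              (etrans (congr1 _ (esym hk2)) hT) (erefl _) c1.
  rewrite /u2 (gmul_gcastr g u hk2) in c2.
  rewrite gcastK in c2; last by rewrite hk2.
  rewrite /v gmulA gcastK; last by rewrite addrA.
  exact c2.
have hn2 : 0 <= gn i2 e2 by move: hi2 he2'; clear_all; rewrite /gn; lia.
case: (decomp hn2 hv) => [hv2 | [i3 [e3 [j3 [hi3 hj3 he3 hn3 hk3]]]]].
  apply: (kill x' (erefl _)); apply: (injG hi hj he hG).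
  apply: (cong_F hb); apply: (cong_F hW).
  have h5 := h4 _ _ _ v D2 hv2.
  have eqk : gk p I eI + gk p i2 e2 + j2 = gk p i e + j by rewrite -addrA -hk2 hT.
  have eqL : gn i2 e2 + 1 - j2 = gm i j e + 1 by move: hm2; clear_all; rewrite /gn /gm; lia.
  exact: (Fcast eqk eqL h5).
have he' : e = 0 \/ e = 1 by move: he; rewrite !inE => /orP [/eqP|/eqP]; [left|right].
have he3' : e3 = 0 \/ e3 = 1 by move: he3; rewrite !inE => /orP [/eqP|/eqP]; [left|right].
have heq : 2 * i3 * (p%:Z - 1) + e3 + (2 * i3 + e3) = 2 * i * (p%:Z - 1) + e + (2 * i + e).
  have : gk p i3 e3 + (2 * i3 + e3) = gk p i e + (2 * i + e).
    move: hk3 hn3 hk2 hm2 hD hDa; clear_all; rewrite /gn /gm; lia.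
  by rewrite /gk.
have [ei3 ee3] := ar_eq _ _ _ _ _ Pg he' he3' heq.
subst i3 e3.
pose v3 := (gcast A v : A (gk p i e + j3)).
have hv3 : v3 \in F (gm i j3 e) (gk p i e + j3) by exact: (Fcast hk3 hn3 hv).
have [q hq hq2] := (h8 i j3 e hi hj3 he).2 _ hv3.
set Eb := \sum_(gc <- q) mu gc.1 *: gc.2.
have hn3' : 2 * i2 + e2 = 2 * i - j3 + e by move: hn3; rewrite /gn /gm.
have hkap : gkappa j3 e = e2 := ar_kappa _ _ _ _ _ hj3 he' he2' hn3'.
have dga : gk p i2 e2 = gda p i j3 e.
  rewrite /gda hkap /gm -hn3' /gk; clear_all; nia.
have ddb : gk p I eI = gdb p j3 e.
  have := gdb_gda i j3 e; move: hk3; rewrite -dga; clear_all; lia.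
have hgb : (gcast A g : A (gdb p j3 e)) \in F (gn I eI) (gdb p j3 e).
  exact: (Fcast ddb (erefl _) hg).
have hHa : (gcast A H : A (gda p i j3 e)) \in F (gm i j3 e) (gda p i j3 e).
  exact: (Fcast dga hn3 hHF).
have hgam : gamma_rep F (gcast A g : A (gdb p j3 e)) (gcast A H : A (gda p i j3 e)) q.
  rewrite /gamma_rep hq /=.
  rewrite (gmul_gcastl _ _ ddb) (gmul_gcastr _ _ dga) gcastK; last by rewrite ddb.
  rewrite gcastK; last by rewrite ddb dga.
  exact: (cong_sym hq2).
have hEb : Eb \in F (Order.min (ceilz p (gn I eI)) (gm i j3 e + 1)) j3.
  by have := h9 i j3 e hi hj3 he (gn I eI) _ _ q hgb hHa hgam; case: hG => _ hmu _ _; apply.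
have hc3 : cong (gm i j3 e + 1) v3 (gmul G Eb).
  have := collapse hG hq.
  have -> : gn i e + 1 - j3 = gm i j3 e + 1 by clear_all; rewrite /gn /gm; lia.
  move=> hcol; apply: (cong_trans (v := \sum_(gc <- q) gmul gc.1 gc.2)) => //.
  exact: (cong_sym hcol).
have hj32 : j3 + j2 = j by move: hn3' hm2; clear_all; rewrite /gm; lia.
pose b' := (gcast A (gmul Eb D2) : A j).
have hk3' : gk p i e + j3 = gk p I eI + gk p i2 e2 by rewrite hk3.
have hW2 : cong (gm i j e + 1) (gcast A (gmul v D2) : A (gk p i e + j)) (gmul G b').
  have c1 := cong_mulr D2 (erefl _) hc3.
  have eqT : gk p i e + j3 + j2 = gk p i e + j by rewrite -addrA hj32.
  have eqL : gm i j3 e + 1 - j2 = gm i j e + 1.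
    by move: hn3 hm2; clear_all; rewrite /gn /gm; lia.
  have c2 := cong_cast eqT eqL c1.
  have ev : v = gcast A v3 := gcast_inv hk3 (erefl v3).
  rewrite ev (gmul_gcastl _ _ hk3') gcastK in c2 *; last by rewrite hk3'.
  rewrite gmulA gcastK in c2; last by rewrite addrA.
  rewrite /b' (gmul_gcastr _ _ hj32).
  exact: c2.
have hbb : b - b' \in F (gm i j e + 1) j.
  apply: (injG hi hj he hG); rewrite gmulBr.
  exact: (cong_trans (cong_trans hb hW) hW2).
rewrite (cong_kill x' (erefl _) hbb) /b' (gact_gcastl _ _ hj32) gactA.
suff -> : gact Eb z = 0 by rewrite !gcast0.
have hnz : gn i2 e2 + 1 = j2 + gm i j e + 1 by move: hm2; clear_all; rewrite /gn /gm; lia.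
have hL' : gn i2 e2 <= ceilz p (gn I eI).
  apply: (ar_ceil_ge _ _ _ Pg).
  move: hL hk2 hm2 he2' Pg; clear_all; rewrite /gn /gm /gk; nia.
case: (boolP (gn i2 e2 + 1 <= ceilz p (gn I eI))) => hc.
  apply: (kill z hnz); apply: (Fle _ hEb).
  by rewrite le_min hc /= -hn3.
have hEn : Eb \in F (gn i2 e2) j3.
  apply: (Fle _ hEb); rewrite le_min hL' /= -hn3.
  by clear_all; lia.
case: (boolP ((j3 < gk p i2 e2) || (((gn i2 e2 + j3) %% (2 * p%:Z))%Z \notin [:: 0; 2]))) => hc2.
  apply: (kill z hnz); apply: (h6 i2 j3 e2 he2 _ Eb hEn).
  by case/orP: hc2 => h; [left | right].
move: hc2; rewrite negb_or negbK -leNgt inE => /andP [hk hrr].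
have h2ie : gn i2 e2 + j3 = 2 * i + e by move: hn3'; clear_all; rewrite /gn; lia.
have hr' : ((2 * i + e) %% (2 * p%:Z))%Z = 0 \/ ((2 * i + e) %% (2 * p%:Z))%Z = 2.
  by move: hrr; rewrite h2ie !inE => /orP [/eqP|/eqP]; [left|right].
have he0 : e = 0 := ar_mod_e _ _ _ Pg he' hr'.
have hcl : gn I eI <= p%:Z * gn i2 e2.
  apply: (ar_ceil_le _ _ _ Pg); move: hc; clear_all; lia.
have heI' : eI = 0 \/ eI = 1 by move: heI; rewrite !inE => /orP [/eqP|/eqP]; [left|right].
have hj3e : j3 = gk p i2 e2.
  have H1 : 2 * I * (p%:Z - 1) + eI + (2 * i2 * (p%:Z - 1) + e2) = 2 * i * (p%:Z - 1) + 0 + j3.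
    by move: hk3; rewrite /gk he0.
  have H2 : 2 * i2 + e2 = 2 * i - j3 + 0 by move: hn3'; rewrite he0.
  have H3 : 2 * I + eI <= p%:Z * (2 * i2 + e2) by move: hcl; rewrite /gn.
  have H4 : 2 * i2 * (p%:Z - 1) + e2 <= j3 by move: hk; rewrite /gk.
  exact: (ar_final (p%:Z) I eI i i2 e2 j3 Pg heI' he2' H1 H2 H3 H4).
have hEb' : (gcast A Eb : A (gk p i2 e2)) \in F (gn i2 e2) (gk p i2 e2).
  exact: (Fcast hj3e (erefl _) hEn).
case: hH => _ _ hcoH _.
have k0 := kill z hnz (hcoH _ hEb').
rewrite gactBl gactZl hz scaler0 subr0 (gact_gcastl _ _ hj3e) in k0.
by apply: (gcast_eq0 _ k0); rewrite hj3e.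
Qed.

Lemma Key D (a : A D) : 0 <= da + gm i j e -> D + da = gk p i e + j ->
  a \in F (da + gm i j e) D -> Good a.
Proof.
move=> hN hDa ha.
suff : forall d : nat, forall L, da + gm i j e <= L -> D + 1 - d%:Z <= L ->
  forall a : A D, a \in F L D -> Good a.
  by move=> /(_ (absz (D + 1 - (da + gm i j e))%R) (da + gm i j e)%R (lexx _)); apply; first lia.
elim=> [|d IH] L hL hB a0 ha0.
  have -> : a0 = 0 by apply: (Fzero (L := L)); [lia | lia | exact: ha0].
  exact: Good0.
have hL0 : 0 <= L by lia.
case: (decomp hL0 ha0) => [h | [I [eI [J [hI hJ heI hlv hdg]]]]].
  by apply: (IH (L + 1)) => //; lia.
pose a' := (gcast A a0 : A (gk p I eI + J)).
have ha' : a' \in F (gm I J eI) (gk p I eI + J) by exact: (Fcast hdg hlv ha0).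
have [q hq hq2] := (h8 I J eI hI hJ heI).2 _ ha'.
have ea : a0 = gcast A (\sum_(gc <- q) gmul gc.1 gc.2) + gcast A (a' - \sum_(gc <- q) gmul gc.1 gc.2).
  rewrite -gcastD (addrC (\sum_(gc <- q) gmul gc.1 gc.2)) subrK.
  by apply: gcast_inv; first by rewrite hdg.
rewrite ea; apply: Good_add => //.
  rewrite gcast_sum; apply: Good_sum => // gc hgc.
  apply: Good_prod => //.
  - by move/allP: hq => /(_ gc hgc).
  - by rewrite -hlv.
apply: (IH (L + 1)); [lia | lia |].
have eL : gm I J eI + 1 = L + 1 by rewrite -hlv.
exact: (Fcast (esym hdg) eL hq2).
Qed.

End KeyS.

Lemma flat_sum i j e (phi : A (gk p i e) -> K)
    (s : seq (A (gda p i j e) * M (gm i j e))) (ts : seq (seq (A (gk p i e) * A j)))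
    (R : A (gda p i j e) * M (gm i j e) -> seq (A (gk p i e) * A j) -> bool)
    (f : A (gda p i j e) * M (gm i j e) -> M (j + gm i j e)) :
  all2 R s ts ->
  (forall gx t, gx \in s -> R gx t ->
     \sum_(hc <- t) phi hc.1 *: gact hc.2 gx.2 = f gx) ->
  \sum_(vw <- flatten [seq [seq (hc.1, gact hc.2 st.1.2) | hc <- st.2] | st <- zip s ts])
     phi vw.1 *: vw.2 = \sum_(gx <- s) f gx.
Proof.
elim: s ts => [|gx s IH] [|t ts] //=; first by rewrite !big_nil.
move=> /andP [hR hall] hf.
rewrite big_cat big_map big_cons (hf gx t (mem_head _ _) hR); congr (_ + _).
apply: IH => // gx' t' hgx' hR'; apply: hf => //; by rewrite inE hgx' orbT.
Qed.

Lemma ker_main : desusp_ker_unstable p F M.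
Proof.
move=> i j e hi hj he s hs hsum a ha ts hts phi hphi.
have Pg := Pge.
have he' : e = 0 \/ e = 1 by move: he; rewrite !inE => /orP [/eqP|/eqP]; [left|right].
have [G [mu hG]] := gen' hi he.
rewrite inE; apply/eqP.
case: (ltP (gm i j e) 0) => hm.
  rewrite (flat_sum (f := fun _ => 0) hts); first by rewrite big1.
  move=> gx t _ _; rewrite (Mneg _ _ _ _ _ hp h1 hu _ gx.2 hm).
  by rewrite big1 // => hc _; rewrite gact0r scaler0.
have [i0 [e0 [hme he0]]] : exists i0 e0 : int, gm i j e = 2 * i0 + e0 /\ (e0 = 0 \/ e0 = 1).
  by exists (gm i j e %/ 2)%Z, (gm i j e %% 2)%Z; clear_all; lia.
have hi0 : 0 <= i0 by move: hm hme he0; clear_all; lia.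
have he0l : e0 \in [:: 0; 1] by case: he0 => ->.
have hkap : gkappa j e = e0.
  exact: (ar_kappa _ _ _ _ _ hj he' he0 (esym hme)).
have hda : gk p i0 e0 = gda p i j e.
  by rewrite /gda hkap hme /gk; clear_all; nia.
have [G0 [mu0 hG0]] := gen' hi0 he0l.
have hlv0 : gn i0 e0 = gm i j e by rewrite hme.
pose G2 := (gcast A G0 : A (gda p i j e)).
have hG2 : G2 \in F (gm i j e) (gda p i j e).
  by case: hG0 => hG0F _ _ _; exact: (Fcast hda hlv0 hG0F).
pose c (g : A (gda p i j e)) := mu0 (gcast A g : A (gk p i0 e0)).
have hcg : forall g, g \in F (gm i j e) (gda p i j e) -> cong (gm i j e + 1) g (c g *: G2).
  move=> g hg; case: hG0 => _ _ hco _.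
  have hg' : (gcast A g : A (gk p i0 e0)) \in F (gn i0 e0) (gk p i0 e0).
    exact: (Fcast (esym hda) (esym hlv0) hg).
  have := hco _ hg'.
  have hlv1 : gn i0 e0 + 1 = gm i j e + 1 by rewrite hlv0.
  move=> /(Fcast hda hlv1); rewrite gcastB gcastZ gcastK; last by rewrite hda.
  by rewrite gcastE.
pose x' := \sum_(gx <- s) c gx.1 *: gx.2.
have hx' : gact G2 x' = 0.
  rewrite -hsum /x' gact_sumr; apply: eq_big_seq => gx hgx.
  have hg : gx.1 \in F (gm i j e) (gda p i j e) by move/allP: hs => /(_ gx hgx).
  rewrite gactZr (cong_kill gx.2 (erefl _) (hcg _ hg)) gactZl.
  by [].
have hN : 0 <= gda p i j e + gm i j e.
  by rewrite -hda hme /gk; move: hi0 he0 Pg; clear_all; nia.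
have hDa := gdb_gda i j e.
have eN : p%:Z * (gm i j e - gkappa j e) + 2 * gkappa j e = gda p i j e + gm i j e.
  by rewrite /gda; clear_all; nia.
rewrite eN in ha.
have hgood := Key hi hj he hG hG2 hx' hm hN hDa ha.
have [bs hbs] := rep hi hj he hG hG2 a hDa.
have hbs0 := hgood bs hbs.
case: (hG) => hGF _ hco _.
rewrite (flat_sum (f := fun gx => phi G *: gact bs (c gx.1 *: gx.2)) hts).
  by rewrite -scaler_sumr -gact_sumr -/x' hbs0 scaler0.
move=> gx t hgx /andP [ht hrep].
have hg : gx.1 \in F (gm i j e) (gda p i j e) by move/allP: hs => /(_ gx hgx).
have e1 : \sum_(hc <- t) phi hc.1 *: gact hc.2 gx.2 =
          \sum_(hc <- t) phi G *: (mu hc.1 *: gact hc.2 gx.2).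
  apply: eq_big_seq => hc hhc.
  by rewrite (phi_coord hGF hphi hco (allP ht _ hhc)) mulrC -scalerA.
rewrite e1 -scaler_sumr; congr (_ *: _).
set bl := \sum_(hc <- t) mu hc.1 *: hc.2.
have e2 : \sum_(hc <- t) mu hc.1 *: gact hc.2 gx.2 = gact bl gx.2.
  by rewrite /bl gact_suml; apply: eq_bigr => hc _; rewrite gactZl.
rewrite e2 gactZr -gactZl.
apply: (cong_kill gx.2 (erefl _)).
apply: (injG hi hj he hG); rewrite gmulBr gmulZr.
have c1 : cong (gm i j e + 1) (gmul G bl) (\sum_(hc <- t) gmul hc.1 hc.2).
  have := collapse hG ht.
  by have -> : gn i e + 1 - j = gm i j e + 1 by clear_all; rewrite /gn /gm; lia.
have c2 : cong (gm i j e + 1) (\sum_(hc <- t) gmul hc.1 hc.2)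
            (gcast A (gmul a gx.1) : A (gk p i e + j)) by [].
have c3 : cong (gm i j e + 1) (gcast A (gmul a gx.1) : A (gk p i e + j))
            (gcast A (gmul a (c gx.1 *: G2))).
  exact: (cong_cast hDa (erefl _) (cong_mull a (hcg _ hg))).
rewrite gmulZr gcastZ in c3.
have c4 : cong (gm i j e + 1) (c gx.1 *: (gcast A (gmul a G2) : A (gk p i e + j)))
             (c gx.1 *: gmul G bs).
  rewrite /cong -scalerBr; apply: Fscale.
  exact: (cong_sym hbs).
exact: (cong_trans (cong_trans (cong_trans c1 c2) c3) c4).
Qed.

End Ker.


Unset Implicit Arguments.
Theorem lemma3p8 (K : fieldType) (p : nat) (A : galg K) (F : gfilt A)
    (M : gmod A) :
  p \in [pchar K]%R ->
  E1 F -> E2 F -> E3 F -> E4 F -> E6 p F -> E7 p F -> E8 p F ->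
  unstable F M ->
  desusp_coker_unstable p F M /\ (E9 p F -> desusp_ker_unstable p F M).
Proof.
move=> hp h1 h2 h3 h4 h6 h7 h8 hu; split.
  move=> n k a x ha; exact: (coker_main K p A F M hp h1 h6 h8 hu (n + 1) k a x ha).
by move=> h9; apply: ker_main.
Qed.
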